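(* Let $S$ be a quasi-adequate semigroup with an adequate transversal $S^0$, and let $x,y$ be regular elements of $S$. Then $\overline{xy}=\overline{x}\,\overline{y}$.
   Context: For a semigroup $S$, $S^1$ is $S$ with an identity adjoined, $\mathcal{L},\mathcal{R}$ Green's relations. $\mathcal{R}^\ast=\{(a,b):\forall x,y\in S^1,\ xa=ya\iff xb=yb\}$, $\mathcal{L}^\ast=\{(a,b):\forall x,y\in S^1,\ ax=ay\iff bx=by\}$. $S$ is abundant if each $\mathcal{R}^\ast$- and $\mathcal{L}^\ast$-class contains an idempotent; adequate if also idempotents commute (then $a^+$, $a^\ast$ are the unique idempotents $\mathcal{R}^\ast$-, resp. $\mathcal{L}^\ast$-related to $a$). Quasi-adequate: abundant with idempotents forming a subsemigroup. An abundant subsemigroup $U$ of abundant $S$ is a $\ast$-subsemigroup if $\mathcal{L}^\ast(U)=\mathcal{L}^\ast(S)\cap(U\times U)$, $\mathcal{R}^\ast(U)=\mathcal{R}^\ast(S)\cap(U\times U)$. An adequate $\ast$-subsemigroup $S^0$ of abundant $S$ is an adequate transversal if each $x\in S$ has a unique $\overline{x}\in S^0$ and idempotents $e,f$ of $S$ with $x=e\overline{x}f$, $e\,\mathcal{L}\,\overline{x}^+$, $f\,\mathcal{R}\,\overline{x}^\ast$. *)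

(* Defs.v *)
Set Implicit Arguments.

Section Semigroup.
Variables (T : Type) (mul : T -> T -> T).

Definition associative_op : Prop :=
  forall a b c, mul a (mul b c) = mul (mul a b) c.

Definition fullset : T -> Prop := fun _ => True.

Definition idem (e : T) : Prop := mul e e = e.

(* elements of U^1 : None is the adjoined identity *)
Definition inU1 (U : T -> Prop) (o : option T) : Prop :=
  match o with None => True | Some x => U x end.

Definition lmul (o : option T) (a : T) : T :=
  match o with None => a | Some x => mul x a end.
Definition rmul (a : T) (o : option T) : T :=
  match o with None => a | Some x => mul a x end.

Definition RstarIn (U : T -> Prop) (a b : T) : Prop :=
  forall x y, inU1 U x -> inU1 U y -> (lmul x a = lmul y a <-> lmul x b = lmul y b).
Definition LstarIn (U : T -> Prop) (a b : T) : Prop :=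
  forall x y, inU1 U x -> inU1 U y -> (rmul a x = rmul a y <-> rmul b x = rmul b y).

Definition GreenL (a b : T) : Prop :=
  (a = b \/ exists s, a = mul s b) /\ (b = a \/ exists s, b = mul s a).
Definition GreenR (a b : T) : Prop :=
  (a = b \/ exists s, a = mul b s) /\ (b = a \/ exists s, b = mul a s).

Definition subsemigroup (U : T -> Prop) : Prop :=
  forall a b, U a -> U b -> U (mul a b).

Definition abundantIn (U : T -> Prop) : Prop :=
  forall a, U a ->
    (exists e, U e /\ idem e /\ RstarIn U a e) /\
    (exists f, U f /\ idem f /\ LstarIn U a f).

Definition adequateIn (U : T -> Prop) : Prop :=
  abundantIn U /\
  forall e f, U e -> U f -> idem e -> idem f -> mul e f = mul f e.

Definition quasi_adequate : Prop :=
  abundantIn fullset /\ forall e f, idem e -> idem f -> idem (mul e f).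

Definition star_subsemigroup (U : T -> Prop) : Prop :=
  subsemigroup U /\ abundantIn U /\
  (forall a b, U a -> U b -> (LstarIn U a b <-> LstarIn fullset a b)) /\
  (forall a b, U a -> U b -> (RstarIn U a b <-> RstarIn fullset a b)).

(* xb is a valid "overline x" for x w.r.t. S0:
   xb in S0 and x = e xb f with e, f idempotents of S, e L xb^+, f R xb^*,
   where xb^+ (resp. xb^* ) is the (unique, since S0 is adequate) idempotent
   of S0 that is R*- (resp. L*-) related to xb. *)
Definition transversal_rep (S0 : T -> Prop) (x xb : T) : Prop :=
  S0 xb /\
  exists e f, idem e /\ idem f /\ x = mul (mul e xb) f /\
    (exists p, S0 p /\ idem p /\ RstarIn S0 xb p /\ GreenL e p) /\
    (exists q, S0 q /\ idem q /\ LstarIn S0 xb q /\ GreenR f q).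

Definition adequate_transversal (S0 : T -> Prop) : Prop :=
  star_subsemigroup S0 /\ adequateIn S0 /\
  forall x, exists! xb, transversal_rep S0 x xb.

Definition regular (x : T) : Prop := exists a, mul (mul x a) x = x.

End Semigroup.

(* Main.v *)
Require Import Defs.
From Stdlib Require Import Setoid Morphisms.
Set Implicit Arguments.

Section Aux.
Variables (T : Type) (mul : T -> T -> T).
Hypothesis Hassoc : forall a b c, mul a (mul b c) = mul (mul a b) c.

Ltac nrm := repeat rewrite <- Hassoc.
Lemma ext2 {x y z} (H : mul x y = z) w : mul x (mul y w) = mul z w.
Proof. rewrite Hassoc, H. reflexivity. Qed.

Lemma Rc1 a e : RstarIn mul (@fullset T) a e -> forall X, mul X a = a -> mul X e = e.
Proof. intros H X E. exact (proj1 (H (Some X) None I I) E). Qed.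
Lemma Rid a e : RstarIn mul (@fullset T) a e -> mul e e = e -> mul e a = a.
Proof. intros H E. exact (proj2 (H (Some e) None I I) E). Qed.
Lemma Rc a e : RstarIn mul (@fullset T) a e -> forall X Y, mul X a = mul Y a -> mul X e = mul Y e.
Proof. intros H X Y E. exact (proj1 (H (Some X) (Some Y) I I) E). Qed.
Lemma Lc1 a e : LstarIn mul (@fullset T) a e -> forall X, mul a X = a -> mul e X = e.
Proof. intros H X E. exact (proj1 (H (Some X) None I I) E). Qed.
Lemma Lid a e : LstarIn mul (@fullset T) a e -> mul e e = e -> mul a e = a.
Proof. intros H E. exact (proj2 (H (Some e) None I I) E). Qed.
Lemma Lc a e : LstarIn mul (@fullset T) a e -> forall X Y, mul a X = mul a Y -> mul e X = mul e Y.
Proof. intros H X Y E. exact (proj1 (H (Some X) (Some Y) I I) E). Qed.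

Lemma GL e p : mul e e = e -> mul p p = p -> GreenL mul e p -> mul e p = e /\ mul p e = p.
Proof.
  intros He Hp [A B]; split.
  - destruct A as [E|[s E]]; [subst; exact He|].
    rewrite E at 1. rewrite <- Hassoc, Hp. symmetry; exact E.
  - destruct B as [E|[s E]]; [subst; exact He|].
    rewrite E at 1. rewrite <- Hassoc, He. symmetry; exact E.
Qed.

Lemma GR f q : mul f f = f -> mul q q = q -> GreenR mul f q -> mul f q = q /\ mul q f = f.
Proof.
  intros Hf Hq [A B]; split.
  - destruct B as [E|[s E]]; [subst; exact Hq|].
    rewrite E at 1. rewrite Hassoc, Hf. symmetry; exact E.
  - destruct A as [E|[s E]]; [subst; exact Hq|].
    rewrite E at 1. rewrite Hassoc, Hq. symmetry; exact E.
Qed.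

Lemma RL al be b : mul al al = al -> mul (mul be al) (mul be al) = mul be al ->
  mul b b = b -> mul b al = al -> mul al b = b -> mul be b = be -> mul b be = b ->
  mul al be = b.
Proof.
  intros Ha Hba Hb H1 H2 H3 H4.
  assert (Hb' : b = mul b (mul be (mul al b))).
  { rewrite H2, Hassoc, H4, Hb. reflexivity. }
  transitivity (mul b (mul al (mul be b))).
  { rewrite H3. rewrite (Hassoc b al be), H1. reflexivity. }
  rewrite Hb' at 1 2.
  nrm.
  rewrite (ext2 H1), (ext2 Ha).
  replace (mul be (mul b (mul be (mul al b)))) with (mul be (mul b (mul al b)))
    by (rewrite (ext2 H4); reflexivity).
  rewrite (ext2 H1).
  assert (Hba' : mul be (mul al (mul be (mul al b))) = mul be (mul al b)).
  { rewrite (Hassoc be al), (Hassoc (mul be al) be), (Hassoc _ al b), <- (Hassoc (mul be al) be al), Hba.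
    rewrite Hassoc. reflexivity. }
  rewrite Hba'. symmetry; exact Hb'.
Qed.
End Aux.

Ltac nrm := match goal with A : forall a b c, ?m a (?m b c) = ?m (?m a b) c |- _ => repeat rewrite <- A end.
Ltac mkx H name := match goal with A : forall a b c, ?m a (?m b c) = ?m (?m a b) c |- _ =>
  match type of H with ?L = ?R =>
  assert (name : forall W, m L W = m R W) by (intro; rewrite H; reflexivity);
  repeat setoid_rewrite <- A in name end end.

Theorem proposition2p5 (T : Type) (mul : T -> T -> T)
  (Hassoc : associative_op mul) (Hqa : quasi_adequate mul)
  (S0 : T -> Prop) (HS0 : adequate_transversal mul S0)
  (x y xb yb xyb : T) (Hx : regular mul x) (Hy : regular mul y)
  (Hxb : transversal_rep mul S0 x xb) (Hyb : transversal_rep mul S0 y yb)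
  (Hxyb : transversal_rep mul S0 (mul x y) xyb) :
  xyb = mul xb yb.
Proof.
  unfold associative_op in Hassoc.
  destruct Hqa as [_ Hband]. unfold idem in Hband.
  destruct HS0 as [[Hsub [_ [HLeq HReq]]] [[Habund Hcomm] Huniq]].
  unfold idem in *.
  destruct Hxb as [S0xb [e [f [He [Hf [Hxe [[p [S0p [Hp [HRp HGLe]]]] [q [S0q [Hq [HLq HGRf]]]]]]]]]]].
  destruct Hyb as [S0yb [g [h [Hg [Hh [Hye [[r [S0r [Hr [HRr HGLg]]]] [s [S0s [Hs [HLs HGRh]]]]]]]]]]].
  destruct Hx as [a Ha]. destruct Hy as [b Hb].
  assert (S0c : S0 (mul xb yb)) by (apply Hsub; auto).
  destruct (Habund _ S0c) as [[t [S0t [Ht HRt0]]] [t' [S0t' [Ht' HLt0]]]].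
  destruct (Huniq (mul x y)) as [xb0 [_ Hu]].
  assert (Hrep : transversal_rep mul S0 (mul x y) (mul xb yb)).
  2:{ rewrite <- (Hu _ Hxyb). apply Hu; exact Hrep. }
  pose proof (proj1 (HReq _ _ S0xb S0p) HRp) as HRp'.
  pose proof (proj1 (HLeq _ _ S0xb S0q) HLq) as HLq'.
  pose proof (proj1 (HReq _ _ S0yb S0r) HRr) as HRr'.
  pose proof (proj1 (HLeq _ _ S0yb S0s) HLs) as HLs'.
  pose proof (proj1 (HReq _ _ S0c S0t) HRt0) as HRt.
  pose proof (proj1 (HLeq _ _ S0c S0t') HLt0) as HLt.
  destruct (GL Hassoc He Hp HGLe) as [ep pe].
  destruct (GR Hassoc Hf Hq HGRf) as [fq qf].
  destruct (GL Hassoc Hg Hr HGLg) as [gr rg].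
  destruct (GR Hassoc Hh Hs HGRh) as [hs sh].
  pose proof (Rid HRp' Hp) as pxb.
  pose proof (Lid HLq' Hq) as xbq.
  pose proof (Rid HRr' Hr) as ryb.
  pose proof (Lid HLs' Hs) as ybs.
  pose proof (Rid HRt Ht) as tc.
  pose proof (Lid HLt Ht') as ct. rewrite <- Hassoc in ct.
  mkx pe pex. mkx pxb pxbx. mkx rg rgx. mkx ryb rybx. mkx xbq xbqx.
  assert (Xr : exists z, mul xb (mul z xb) = xb).
  { exists (mul f (mul a e)).
    assert (pxq : mul p (mul x q) = xb).
    { rewrite Hxe. nrm. rewrite fq, pex, xbq, pxb. reflexivity. }
    transitivity (mul p (mul (mul (mul x a) x) q)); [| rewrite Ha; exact pxq].
    rewrite Hxe. nrm. rewrite fq, pex, xbq, pxbx. reflexivity. }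
  assert (Yr : exists w, mul yb (mul w yb) = yb).
  { exists (mul h (mul b g)).
    assert (rys : mul r (mul y s) = yb).
    { rewrite Hye. nrm. rewrite hs, rgx, ybs, ryb. reflexivity. }
    transitivity (mul r (mul (mul (mul y b) y) s)); [| rewrite Hb; exact rys].
    rewrite Hye. nrm. rewrite hs, rgx, ybs, rybx. reflexivity. }
  destruct Xr as [z Xr]. destruct Yr as [w Yr].
  unfold idem in *.
  assert (Hqr : mul q r = mul r q) by (apply Hcomm; auto).
  assert (S0k : S0 (mul q r)) by (apply Hsub; auto).
  assert (kk : mul (mul q r) (mul q r) = mul q r) by (apply Hband; auto).
  assert (kr : mul (mul q r) r = mul q r) by (rewrite <- Hassoc, Hr; reflexivity).
  assert (qk : mul q (mul q r) = mul q r) by (rewrite Hassoc, Hq; reflexivity).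
  assert (uu : mul (mul f g) (mul f g) = mul f g) by (apply Hband; auto).
  mkx fq fqx. mkx Hqr Hqrx. mkx qf qfx. mkx gr grx.
  assert (F1 : mul (mul f g) (mul (mul q r) (mul f g)) = mul f g).
  { nrm. rewrite <- fqx. rewrite Hqrx. rewrite qfx. rewrite <- grx.
    assert (rf := Hband r f Hr Hf). repeat rewrite <- Hassoc in rf.
    mkx rf rfx. rewrite rfx, grx.
    assert (uu' := uu). repeat rewrite <- Hassoc in uu'. exact uu'. }
  assert (F2 : mul (mul q r) (mul (mul f g) (mul q r)) = mul q r).
  { nrm. rewrite Hqr at 1. rewrite grx. rewrite <- rgx.
    replace (mul g q) with (mul g (mul f q)) by (rewrite fq; reflexivity).
    assert (gf := Hband g f Hg Hf). repeat rewrite <- Hassoc in gf.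
    mkx gf gfx. rewrite gfx, rgx, fq. rewrite <- Hqr. exact qk. }
  assert (uk : mul (mul (mul f g) (mul q r)) (mul (mul f g) (mul q r)) = mul (mul f g) (mul q r))
    by (apply Hband; auto).
  assert (ku : mul (mul (mul q r) (mul f g)) (mul (mul q r) (mul f g)) = mul (mul q r) (mul f g))
    by (apply Hband; auto).
  set (k := mul q r) in *. set (u := mul f g) in *.
  assert (Hk : k = mul q r) by reflexivity.
  assert (Hk' : k = mul r q) by exact Hqr.
  assert (Hueq : u = mul f g) by reflexivity.
  clearbody k u.
  assert (pt : mul p t = t) by exact (Rc1 HRt p (pxbx yb)).
  assert (tp : mul t p = t) by (rewrite (Hcomm t p S0t S0p Ht Hp); exact pt).
  assert (te : mul t e = t) by (rewrite <- tp at 1; rewrite <- Hassoc, pe; exact tp).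
  assert (ts : mul t' s = t').
  { apply (Lc1 HLt s). rewrite <- Hassoc, ybs. reflexivity. }
  assert (st : mul s t' = t') by (rewrite (Hcomm s t' S0s S0t' Hs Ht'); exact ts).
  assert (ht : mul h t' = t') by (rewrite <- st at 1; rewrite Hassoc, hs; exact st).
  assert (ybwr : mul yb (mul w r) = r).
  { pose proof (Rc1 HRr' (mul yb w)) as H0. repeat rewrite <- Hassoc in H0. apply H0. exact Yr. }
  mkx ybwr ybwrx.
  assert (ybwk : mul yb (mul w k) = k) by (rewrite Hk'; apply ybwrx).
  assert (qzxb : mul q (mul z xb) = q) by exact (Lc1 HLq' (mul z xb) Xr).
  assert (kzxb : mul k (mul z xb) = k) by (rewrite Hk', <- Hassoc, qzxb; reflexivity).
  mkx kzxb kzxbx. mkx ybwk ybwkx.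
  assert (Ti : mul xb (mul k (mul z t)) = t).
  { pose proof (Rc1 HRt (mul xb (mul k z))) as H0. repeat rewrite <- Hassoc in H0. apply H0.
    rewrite kzxbx, Hk. nrm. rewrite xbqx, ryb. reflexivity. }
  mkx Ti Tix. mkx Ht Htx. mkx kk kkx. mkx te tex. mkx ct ctx. mkx tc tcx. mkx Ht' Ht'x.
  assert (jr : mul k (mul z (mul t (mul xb r))) = k).
  { pose proof (Rc HRr' (mul k (mul z (mul t xb))) k) as H0.
    repeat rewrite <- Hassoc in H0. rewrite kr in H0. apply H0.
    rewrite tc, kzxbx. reflexivity. }
  assert (jk : mul (mul k (mul z (mul t xb))) k = k).
  { nrm. replace (mul xb k) with (mul xb r) by (rewrite Hk, xbqx; reflexivity). exact jr. }
  assert (kj : mul k (mul k (mul z (mul t xb))) = mul k (mul z (mul t xb)))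
    by (rewrite Hassoc, kk; reflexivity).
  assert (jj : mul (mul k (mul z (mul t xb))) (mul k (mul z (mul t xb))) = mul k (mul z (mul t xb))).
  { nrm. rewrite Tix, Htx. reflexivity. }
  assert (RLt : mul (mul k (mul z (mul t xb))) (mul u k) = k).
  { apply (@RL T mul Hassoc); [exact jj | apply Hband; [exact uk | exact jj] | exact kk | exact kj
      | exact jk | rewrite <- Hassoc, kk; reflexivity | exact F2]. }
  repeat rewrite <- Hassoc in RLt. mkx RLt RLtx.
  assert (keyT : mul t (mul e (mul xb (mul u (mul yb (mul w (mul k (mul z t))))))) = t).
  { rewrite tex.
    pose proof (Rc1 HRt (mul t (mul xb (mul u (mul yb (mul w (mul k z))))))) as H0.
    repeat rewrite <- Hassoc in H0. apply H0.
    rewrite ybwkx, kzxbx. rewrite <- Ti at 1. nrm. rewrite RLtx, Hk. nrm. rewrite xbqx, ryb. reflexivity. }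
  assert (Ti' : mul t' (mul w (mul k yb)) = t').
  { apply (Lc1 HLt (mul w (mul k yb))). nrm. rewrite ybwkx, Hk. nrm. rewrite xbqx, ryb. reflexivity. }
  mkx Ti' Ti'x.
  assert (qj : mul q (mul yb (mul t' (mul w k))) = k).
  { pose proof (Lc HLq' (mul yb (mul t' (mul w k))) k) as H0. rewrite qk in H0. apply H0.
    rewrite ctx, ybwk. reflexivity. }
  assert (kyb : forall W, mul k (mul yb W) = mul q (mul yb W)).
  { intro W. rewrite Hk. nrm. rewrite rybx. reflexivity. }
  assert (kj2 : mul k (mul yb (mul t' (mul w k))) = k) by (rewrite kyb; exact qj).
  assert (j2k : mul (mul yb (mul t' (mul w k))) k = mul yb (mul t' (mul w k)))
    by (nrm; rewrite kk; reflexivity).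
  assert (j2j2 : mul (mul yb (mul t' (mul w k))) (mul yb (mul t' (mul w k))) = mul yb (mul t' (mul w k))).
  { nrm. rewrite Ti'x, Ht'x. reflexivity. }
  assert (RLt2 : mul (mul k u) (mul yb (mul t' (mul w k))) = k).
  { apply (@RL T mul Hassoc); [exact ku | apply Hband; [exact j2j2 | exact ku] | exact kk
      | rewrite Hassoc, kk; reflexivity | rewrite <- Hassoc; exact F2 | exact j2k | exact kj2]. }
  repeat rewrite <- Hassoc in RLt2. mkx RLt2 RLt2x.
  assert (keyT' : mul t' (mul w (mul k (mul z (mul xb (mul u (mul yb (mul h t'))))))) = t').
  { rewrite ht.
    pose proof (Lc1 HLt (mul w (mul k (mul z (mul xb (mul u (mul yb t'))))))) as H0.
    repeat rewrite <- Hassoc in H0. apply H0.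
    rewrite ybwkx, kzxbx. rewrite <- Ti' at 1. nrm. rewrite RLt2x, Hk. nrm. rewrite xbqx, ryb. reflexivity. }
  mkx keyT' keyTx. mkx F1 F1x.
  split; [exact S0c|].
  exists (mul e (mul xb (mul u (mul yb (mul w (mul k (mul z t))))))).
  exists (mul t' (mul w (mul k (mul z (mul xb (mul u (mul yb h))))))).
  split; [| split; [| split; [| split]]].
  - unfold idem. nrm. rewrite keyT. reflexivity.
  - unfold idem. nrm. rewrite keyTx. reflexivity.
  - rewrite Hxe, Hye. nrm.
    replace (mul f (mul g (mul yb h))) with (mul u (mul yb h)) by (rewrite Hueq; nrm; reflexivity).
    rewrite tcx, ctx, ybwkx, ybwkx, kzxbx, kkx, kzxbx, F1x. reflexivity.
  - exists t. split; [exact S0t|]. split; [exact Ht|]. split; [exact HRt0|]. split.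
    + right. exists (mul e (mul xb (mul u (mul yb (mul w (mul k z)))))). nrm. reflexivity.
    + right. exists t. symmetry. nrm. exact keyT.
  - exists t'. split; [exact S0t'|]. split; [exact Ht'|]. split; [exact HLt0|]. split.
    + right. exists (mul w (mul k (mul z (mul xb (mul u (mul yb h)))))). reflexivity.
    + right. exists t'. symmetry. nrm. exact keyT'.
Qed.
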